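(* Let $X$ be a homogeneous chain and $J$ a proper regular interval of $X$; put $J^-=\{t\in X\mid t<x\ \forall x\in J\}$, $J^+=\{t\in X\mid t>x\ \forall x\in J\}$ and $H=\{g\in\mathrm{Aut}(X)\mid g(x)\in J\ \forall x\in J\}$. Then: (1) $H$ is an open subgroup of $(\mathrm{Aut}(X),\tau_p)$, and hence of $(\mathrm{Aut}(X),\tau_\partial)$; (2) $(H,\tau_p)\cong(\mathrm{Aut}(J^-),\tau_p)\times(\mathrm{Aut}(J),\tau_p)\times(\mathrm{Aut}(J^+),\tau_p)$ and $(H,\tau_\partial)\cong(\mathrm{Aut}(J^-),\tau_\partial)\times(\mathrm{Aut}(J),\tau_\partial)\times(\mathrm{Aut}(J^+),\tau_\partial)$ as topological groups; (3) for every $x\in J$, the stabilizer of $x$ for the action $\mathrm{Aut}(X)\curvearrowright X$ equals $\mathrm{Aut}(J^-)\times \mathrm{St}^J_x\times\mathrm{Aut}(J^+)$, where $\mathrm{St}^J_x$ is the stabilizer of $x$ for the action $\mathrm{Aut}(J)\curvearrowright J$.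
   Context: Chain: linearly ordered set; $\mathrm{Aut}(Y)$: group of order-preserving bijections of a chain $Y$; $X$ homogeneous: $\mathrm{Aut}(X)$ transitive. An interval is a convex subset; an interval $J$ is regular if for all $x,y\in J$ and $g\in\mathrm{Aut}(X)$, $g(x)\in J$ implies $g(y)\in J$; it is proper if it is neither a singleton nor $X$. Automorphisms of $J^-$, $J$, $J^+$ are identified with automorphisms of $X=J^-\cup J\cup J^+$ that are the identity on the other two parts. For a chain $Y$, $\tau_p$ on $\mathrm{Aut}(Y)$ is the topology of pointwise convergence w.r.t. the order topology on $Y$, and $\tau_\partial$ is the permutation topology (identity neighbourhood base: pointwise stabilizers of finite subsets of $Y$). *)

(* Defs.v *)
From mathcomp Require Import all_boot all_order.
From Stdlib Require List.
Set Implicit Arguments. Unset Strict Implicit. Unset Printing Implicit Defensive.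
Import Order.TTheory.
Local Open Scope order_scope.

Section ChainDefs.
Variables (d : Order.disp_t) (T : orderType d).

(* Automorphisms of the subchain Y of T, identified (as in the paper) with
   automorphisms of T that are the identity outside Y: g maps Y onto Y and is an
   order isomorphism of Y. *)
Definition is_aut_on (Y : T -> Prop) (g : T -> T) : Prop :=
  [/\ (forall x, ~ Y x -> g x = x),
      (forall x, Y x -> Y (g x)),
      (forall y, Y y -> exists2 x, Y x & g x = y)
    & (forall x y, Y x -> Y y -> (g x <= g y) = (x <= y))].

Definition is_aut (g : T -> T) : Prop := is_aut_on (fun _ => True) g.

Definition homogeneous : Prop := forall x y : T, exists2 g, is_aut g & g x = y.

Definition is_interval (J : T -> Prop) : Prop :=
  (exists x, J x) /\ (forall x y z, J x -> J z -> x <= y -> y <= z -> J y).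

Definition regular_int (J : T -> Prop) : Prop :=
  forall x y g, J x -> J y -> is_aut g -> J (g x) -> J (g y).

Definition proper_int (J : T -> Prop) : Prop :=
  ~ (exists x, forall y, J y <-> y = x) /\ ~ (forall y, J y).

Definition lower (J : T -> Prop) (t : T) : Prop := forall x, J x -> t < x.
Definition upper (J : T -> Prop) (t : T) : Prop := forall x, J x -> x < t.

Definition setstab (J : T -> Prop) (g : T -> T) : Prop :=
  is_aut g /\ forall x, J x -> J (g x).

End ChainDefs.

(* Topology on the ambient set X generated by the subbasis S (finite
   intersections of members of S, within X, form a basis; the empty
   intersection is X itself). *)
Definition gen_open {A : Type} (X : A -> Prop) (S : (A -> Prop) -> Prop)
  (U : A -> Prop) : Prop :=
  (forall a, U a -> X a) /\
  forall a, U a -> exists s : seq (A -> Prop),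
    [/\ (forall V, List.In V s -> S V), (forall V, List.In V s -> V a)
      & (forall b, X b -> (forall V, List.In V s -> V b) -> U b)].

Definition sub_open {A : Type} (B : A -> Prop) (op : (A -> Prop) -> Prop)
  (U : A -> Prop) : Prop :=
  exists2 V, op V & forall a, U a <-> (B a /\ V a).

Section Topologies.
Variables (d : Order.disp_t) (T : orderType d).

Definition ray_subbasis (Y : T -> Prop) (V : T -> Prop) : Prop :=
  exists2 a, Y a &
    ((forall z, V z <-> (Y z /\ z < a)) \/ (forall z, V z <-> (Y z /\ a < z))).

Definition order_open (Y : T -> Prop) : (T -> Prop) -> Prop :=
  gen_open Y (ray_subbasis Y).

(* tau_p on Aut(Y): pointwise convergence w.r.t. the order topology of Y
   (subspace of the product topology on Y^Y). *)
Definition tau_p (Y : T -> Prop) : ((T -> T) -> Prop) -> Prop :=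
  gen_open (is_aut_on Y)
    (fun V => exists y O, [/\ Y y, order_open Y O
                           & forall h, V h <-> (is_aut_on Y h /\ O (h y))]).

(* tau_partial on Aut(Y): permutation topology; U is open iff each g in U has
   a basic neighbourhood g * Stab(F) inside U, F a finite subset of Y. *)
Definition tau_d (Y : T -> Prop) (U : (T -> T) -> Prop) : Prop :=
  (forall g, U g -> is_aut_on Y g) /\
  forall g, U g -> exists s : seq T,
    (forall y, List.In y s -> Y y) /\
    (forall h, is_aut_on Y h -> (forall y, List.In y s -> h y = y) -> U (g \o h)).

End Topologies.

Section Groups.
Variable (A : Type).

Definition subgroup (G H : (A -> A) -> Prop) : Prop :=
  [/\ (forall g, H g -> G g), H id,
      (forall g h, H g -> H h -> H (g \o h))
    & (forall g g', H g -> cancel g g' -> cancel g' g -> H g')].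

Definition triple := ((A -> A) * (A -> A) * (A -> A))%type.

Definition in3 (A1 A2 A3 : (A -> A) -> Prop) (p : triple) : Prop :=
  [/\ A1 p.1.1, A2 p.1.2 & A3 p.2].

Definition prod3_open (A1 A2 A3 : (A -> A) -> Prop)
  (o1 o2 o3 : ((A -> A) -> Prop) -> Prop) : (triple -> Prop) -> Prop :=
  gen_open (in3 A1 A2 A3)
    (fun V => exists O,
       [\/ o1 O /\ (forall p, V p <-> (in3 A1 A2 A3 p /\ O p.1.1)),
           o2 O /\ (forall p, V p <-> (in3 A1 A2 A3 p /\ O p.1.2))
         | o3 O /\ (forall p, V p <-> (in3 A1 A2 A3 p /\ O p.2))]).

Definition mul3 (p q : triple) : triple :=
  (p.1.1 \o q.1.1, p.1.2 \o q.1.2, p.2 \o q.2).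

Definition topgrp_iso3 (H : (A -> A) -> Prop) (oH : ((A -> A) -> Prop) -> Prop)
  (A1 A2 A3 : (A -> A) -> Prop) (oP : (triple -> Prop) -> Prop)
  (f : (A -> A) -> triple) (f' : triple -> (A -> A)) : Prop :=
  [/\ (forall g, H g -> in3 A1 A2 A3 (f g)),
      (forall p, in3 A1 A2 A3 p -> H (f' p)),
      (forall g, H g -> f' (f g) = g)
    & (forall p, in3 A1 A2 A3 p -> f (f' p) = p)] /\
  [/\ (forall g h, H g -> H h -> f (g \o h) = mul3 (f g) (f h)),
      (forall O, oP O -> oH (fun g => H g /\ O (f g)))
    & (forall O, oH O -> oP (fun p => in3 A1 A2 A3 p /\ O (f' p)))].

End Groups.

(* Main.v *)
Require Import Defs.
From mathcomp Require Import all_boot all_order.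
From Stdlib Require Import ClassicalEpsilon FunctionalExtensionality Classical.
Set Implicit Arguments. Unset Strict Implicit. Unset Printing Implicit Defensive.
Import Order.TTheory.
Local Open Scope order_scope.

Section Gen.
Variable A : Type.
Definition nbhd (X : A -> Prop) (S : (A->Prop)->Prop) (a : A) (P : A -> Prop) :=
  exists s : seq (A -> Prop), [/\ (forall V, List.In V s -> S V),
     (forall V, List.In V s -> V a)
   & (forall b, X b -> (forall V, List.In V s -> V b) -> P b)].

Lemma nbhd_mono X S a (P Q : A -> Prop) :
  (forall b, X b -> P b -> Q b) -> nbhd X S a P -> nbhd X S a Q.
Proof. move=> PQ [s [h1 h2 h3]]; exists s; split=> // b Xb hb; apply: PQ=> //; exact: h3. Qed.

Lemma nbhd_and X S a (P Q : A -> Prop) :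
  nbhd X S a P -> nbhd X S a Q -> nbhd X S a (fun b => P b /\ Q b).
Proof.
move=> [s [h1 h2 h3]] [t [k1 k2 k3]]; exists (s ++ t); split.
- by move=> V /List.in_app_iff [/h1|/k1].
- by move=> V /List.in_app_iff [/h2|/k2].
- move=> b Xb hb; split; [apply: h3 => // V hV|apply: k3 => // V hV];
  apply: hb; apply/List.in_app_iff; tauto.
Qed.

Lemma nbhd_true X S a : nbhd X S a (fun _ => True).
Proof. by exists [::]; split. Qed.

Lemma nbhd_sub X S a V : S V -> V a -> nbhd X S a V.
Proof.
move=> SV Va; exists [:: V]; split.
- by move=> W [<-|[]].
- by move=> W [<-|[]].
- by move=> b _ hb; apply: hb; left.
Qed.

Lemma nbhd_open X S U a : gen_open X S U -> U a -> nbhd X S a U.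
Proof. by move=> [_ h] /h. Qed.

Lemma nbhd_list (I : Type) X S a (s : seq I) (F : I -> A -> Prop) :
  (forall V, List.In V s -> nbhd X S a (F V)) ->
  nbhd X S a (fun b => forall V, List.In V s -> F V b).
Proof.
elim: s => [|V s IH] h.
  by apply: nbhd_mono (nbhd_true X S a) => b _ _ V [].
have := nbhd_and (h V (or_introl erefl)) (IH (fun W hW => h W (or_intror hW))).
apply: nbhd_mono => b _ [h1 h2] W [<-|hW] //; exact: h2.
Qed.

Lemma gen_open_ext X S (U U' : A -> Prop) :
  (forall a, U a <-> U' a) -> gen_open X S U -> gen_open X S U'.
Proof.
move=> e [h1 h2]; split; first by move=> a /e /h1.
move=> a /e /h2; apply: nbhd_mono => b _ /e //.
Qed.

Lemma gen_open_self (X : A -> Prop) (S : (A -> Prop) -> Prop) : gen_open X S X.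
Proof. split=> // a _; apply: nbhd_mono (nbhd_true X S a) => //. Qed.

Lemma gen_open_sub (X : A -> Prop) S (V : A -> Prop) : S V -> (forall a, V a -> X a) -> gen_open X S V.
Proof. move=> SV VX; split=> // a Va; exact: nbhd_sub. Qed.
End Gen.

Lemma gen_cont {A B : Type} (X1 : A -> Prop) S1 (D : A -> Prop) (phi : A -> B)
  (X2 : B -> Prop) S2 U :
  gen_open X1 S1 D -> (forall a, D a -> X2 (phi a)) ->
  (forall V a, S2 V -> D a -> V (phi a) -> nbhd X1 S1 a (fun b => D b -> V (phi b))) ->
  gen_open X2 S2 U -> gen_open X1 S1 (fun a => D a /\ U (phi a)).
Proof.
move=> oD DX hV [_ oU]; split; first by move=> a [/oD.1].
move=> a [Da Ua]; have [s [sS sa sU]] := oU _ Ua.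
have := nbhd_and (nbhd_open oD Da)
   (nbhd_list (F := fun V b => D b -> V (phi b)) (fun V hV' => hV V a (sS V hV') Da (sa V hV'))).
apply: nbhd_mono => b Xb [Db hb]; split=> //; apply: sU; first exact: DX.
by move=> V hV'; apply: hb.
Qed.
Section Chain.
Variables (d : Order.disp_t) (T : orderType d).

Definition convex (Y : T -> Prop) :=
  forall x y z, Y x -> Y z -> x <= y -> y <= z -> Y y.

Lemma aut_lt (Y : T -> Prop) g x y : is_aut_on Y g -> Y x -> Y y -> (g x < g y) = (x < y).
Proof. by case=> _ _ _ o Yx Yy; rewrite !ltNge o. Qed.

Lemma aut_inj (Y : T -> Prop) g x y : is_aut_on Y g -> Y x -> Y y -> g x = g y -> x = y.
Proof.
case=> _ _ _ o Yx Yy e; apply/le_anti/andP; split; [by rewrite -(o x y) // e lexx|by rewrite -(o y x) // e lexx].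
Qed.

Lemma aut_out (Y : T -> Prop) (g : T -> T) x : is_aut_on Y g -> ~ Y x -> g x = x.
Proof. by case=> h _ _ _; apply: h. Qed.
Lemma aut_in (Y : T -> Prop) (g : T -> T) x : is_aut_on Y g -> Y x -> Y (g x).
Proof. by case=> _ h _ _; apply: h. Qed.

Lemma aut_comp (Y : T -> Prop) g h : is_aut_on Y g -> is_aut_on Y h -> is_aut_on Y (g \o h).
Proof.
move=> [g1 g2 g3 g4] [h1 h2 h3 h4]; split.
- by move=> x nY /=; rewrite h1 // g1.
- by move=> x Yx /=; apply/g2/h2.
- move=> y Yy; have [x Yx <-] := g3 y Yy; have [z Yz <-] := h3 x Yx; by exists z.
- by move=> x y Yx Yy /=; rewrite g4 ?h4 //; apply: h2.
Qed.

Lemma aut_id (Y : T -> Prop) : is_aut_on Y id.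
Proof. split=> // y Yy; by exists y. Qed.

Lemma aut_of_cancel (g g' : T -> T) : is_aut g -> cancel g g' -> cancel g' g -> is_aut g'.
Proof.
move=> [_ _ _ o] c1 c2; split=> //.
- by move=> y _; exists (g y).
- by move=> x y _ _; rewrite -o // !c2.
Qed.

Lemma aut_inv (g : T -> T) : is_aut g -> exists g', [/\ is_aut g', cancel g g' & cancel g' g].
Proof.
move=> ag; have [_ _ s _] := ag.
have hs : forall y, {x | g x = y}.
  move=> y; apply: constructive_indefinite_description.
  by have [x _ e] := s y I; exists x.
pose g' y := proj1_sig (hs y).
have c2 : cancel g' g by move=> y; rewrite /g'; case: (hs y).
have c1 : cancel g g' by move=> x; apply: (aut_inj (Y := fun _ => True)) ag I I _; rewrite c2.
exists g'; split=> //; exact: aut_of_cancel c1 c2.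
Qed.

Lemma convex_side (Y : T -> Prop) a y : convex Y -> Y a -> ~ Y y ->
  (forall b, Y b -> b < y) \/ (forall b, Y b -> y < b).
Proof.
move=> cY Ya nY; case: (leP a y) => [ay|ya].
- left=> b Yb; case: (ltP b y) => // yb; case: nY; exact: cY Ya Yb ay yb.
- right=> b Yb; case: (ltP y b) => // by_; case: nY; apply: cY Yb Ya by_ (ltW ya).
Qed.

Lemma aut_on_glob (Y : T -> Prop) (g : T -> T) : convex Y -> is_aut_on Y g -> is_aut g.
Proof.
move=> cY ag; have [g1 g2 g3 g4] := ag; split=> //.
- move=> y _; case: (classic (Y y)) => Yy; first by have [x _ e] := g3 y Yy; exists x.
  by exists y; rewrite ?g1.
- move=> x y _ _.
  case: (classic (Y x)) => Yx; case: (classic (Y y)) => Yy.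
  + exact: g4.
  + rewrite (g1 y) //; have Ygx := g2 x Yx.
    case: (convex_side cY Yx Yy) => h.
      by rewrite (ltW (h _ Ygx)) (ltW (h _ Yx)).
    by rewrite !leNgt (h _ Ygx) (h _ Yx).
  + rewrite (g1 x) //; have Ygy := g2 y Yy.
    case: (convex_side cY Yy Yx) => h.
      by rewrite !leNgt (h _ Ygy) (h _ Yy).
    by rewrite (ltW (h _ Ygy)) (ltW (h _ Yy)).
  + by rewrite !g1.
Qed.

Definition restr (Y : T -> Prop) (g : T -> T) : T -> T :=
  fun x => if excluded_middle_informative (Y x) then g x else x.

Lemma restr_in (Y : T -> Prop) (g : T -> T) x : Y x -> restr Y g x = g x.
Proof. by rewrite /restr; case: excluded_middle_informative. Qed.

Lemma restr_out (Y : T -> Prop) (g : T -> T) x : ~ Y x -> restr Y g x = x.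
Proof. by rewrite /restr; case: excluded_middle_informative. Qed.

Lemma restr_aut (Y : T -> Prop) (g : T -> T) : is_aut g -> (forall x, Y (g x) <-> Y x) ->
  is_aut_on Y (restr Y g).
Proof.
move=> [_ _ s o] e; split.
- by move=> x nY; rewrite restr_out.
- by move=> x Yx; rewrite restr_in // e.
- move=> y Yy; have [x _ gx] := s y I.
  have Yx : Y x by rewrite -e gx.
  by exists x; rewrite ?restr_in.
- by move=> x y Yx Yy; rewrite !restr_in // o.
Qed.

End Chain.
Section WithJ.
Variables (d : Order.disp_t) (T : orderType d) (J : T -> Prop).
Hypotheses (hom : homogeneous T) (hint : is_interval J) (hreg : regular_int J)
  (hprop : proper_int J).

Local Notation Jm := (lower J).
Local Notation Jp := (upper J).
Local Notation H := (setstab J).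

Lemma x0J : exists x, J x. Proof. by case: hint. Qed.

Lemma convJ : convex J. Proof. by case: hint => _ c x y z; apply: c. Qed.
Lemma convJm : convex Jm.
Proof. move=> x y z _ hz _ yz w Jw; exact: le_lt_trans yz (hz w Jw). Qed.
Lemma convJp : convex Jp.
Proof. move=> x y z hx _ xy _ w Jw; exact: lt_le_trans (hx w Jw) xy. Qed.

Lemma regions t : Jm t \/ J t \/ Jp t.
Proof.
case: (classic (Jm t)) => [|nm]; first by left.
case: (classic (Jp t)) => [|np]; first by right; right.
right; left.
have [a [Ja ha]] : exists a, J a /\ a <= t.
  apply: NNPP => hn; apply: nm => x Jx; rewrite ltNge; apply/negP => xt.
  by apply: hn; exists x.
have [b [Jb hb]] : exists b, J b /\ t <= b.
  apply: NNPP => hn; apply: np => x Jx; rewrite ltNge; apply/negP => xt.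
  by apply: hn; exists x.
exact: convJ Ja Jb ha hb.
Qed.

Lemma JnJm t : J t -> ~ Jm t. Proof. by move=> Jt /(_ t Jt); rewrite ltxx. Qed.
Lemma JnJp t : J t -> ~ Jp t. Proof. by move=> Jt /(_ t Jt); rewrite ltxx. Qed.
Lemma JmnJp t : Jm t -> ~ Jp t.
Proof.
move=> h1 h2; have [x Jx] := x0J; have := lt_trans (h1 x Jx) (h2 x Jx).
by rewrite ltxx.
Qed.
Lemma JmnJ t : Jm t -> ~ J t. Proof. by move=> h /JnJm. Qed.
Lemma JpnJ t : Jp t -> ~ J t. Proof. by move=> h /JnJp. Qed.
Lemma JpnJm t : Jp t -> ~ Jm t. Proof. by move=> h /JmnJp. Qed.

Lemma H_of_point g x : is_aut g -> J x -> J (g x) -> H g.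
Proof. move=> ag Jx Jgx; split=> // y Jy; exact: hreg Jx Jy ag Jgx. Qed.

Lemma H_cancel g g' : H g -> cancel g g' -> cancel g' g -> H g'.
Proof.
move=> [ag hg] c1 c2; have ag' := aut_of_cancel ag c1 c2.
have [x Jx] := x0J; apply: (H_of_point (x := g x)) => //; first exact: hg.
by rewrite c1.
Qed.

Lemma H_inv g : H g -> exists g', [/\ H g', cancel g g' & cancel g' g].
Proof.
move=> Hg; have [g' [_ c1 c2]] := aut_inv Hg.1; exists g'; split=> //.
exact: H_cancel c1 c2.
Qed.

Lemma H_J g x : H g -> (J (g x) <-> J x).
Proof.
move=> Hg; split; last exact: Hg.2.
have [g' [Hg' c1 _]] := H_inv Hg; move=> /Hg'.2; by rewrite c1.
Qed.

Lemma H_Jm g x : H g -> (Jm (g x) <-> Jm x).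
Proof.
move=> Hg; have [g' [Hg' c1 c2]] := H_inv Hg; split.
- move=> h y Jy; have := h (g y) (Hg.2 y Jy).
  by rewrite (@aut_lt _ _ (fun _ => True) g x y Hg.1 I I).
- move=> h y Jy; rewrite -(c2 y) (@aut_lt _ _ (fun _ => True) g x (g' y) Hg.1 I I).
  by apply: h; apply: Hg'.2.
Qed.

Lemma H_Jp g x : H g -> (Jp (g x) <-> Jp x).
Proof.
move=> Hg; have [g' [Hg' c1 c2]] := H_inv Hg; split.
- move=> h y Jy; have := h (g y) (Hg.2 y Jy).
  by rewrite (@aut_lt _ _ (fun _ => True) g y x Hg.1 I I).
- move=> h y Jy; rewrite -(c2 y) (@aut_lt _ _ (fun _ => True) g (g' y) x Hg.1 I I).
  by apply: h; apply: Hg'.2.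
Qed.

Lemma exists_other x : J x -> exists2 y, J y & y != x.
Proof.
move=> Jx; apply: NNPP => hn; apply: hprop.1; exists x => y; split.
- move=> Jy; apply/eqP; apply: negbNE; apply/negP => ne; apply: hn; by exists y.
- by move=> ->.
Qed.

Lemma no_max x : J x -> exists2 y, J y & x < y.
Proof.
move=> Jx; apply: NNPP => hn.
have le : forall y, J y -> y <= x.
  move=> y Jy; rewrite leNgt; apply/negP => xy; apply: hn; by exists y.
have [y Jy ne] := exists_other Jx.
have yx : y < x by rewrite lt_neqAle ne le.
have [g ag gx] := hom x y.
have Hg : H g by apply: (H_of_point (x := x)) => //; rewrite gx.
have [g' [Hg' c1 c2]] := H_inv Hg.
have := le _ (Hg'.2 x Jx); have [_ _ _ o] := Hg.1.
rewrite -(o _ _ I I) c2 gx => xy.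
by move: (lt_le_trans yx xy); rewrite ltxx.
Qed.

Lemma no_min x : J x -> exists2 y, J y & y < x.
Proof.
move=> Jx; apply: NNPP => hn.
have le : forall y, J y -> x <= y.
  move=> y Jy; rewrite leNgt; apply/negP => xy; apply: hn; by exists y.
have [y Jy ne] := exists_other Jx.
have yx : x < y by rewrite lt_neqAle eq_sym ne le.
have [g ag gx] := hom x y.
have Hg : H g by apply: (H_of_point (x := x)) => //; rewrite gx.
have [g' [Hg' c1 c2]] := H_inv Hg.
have := le _ (Hg'.2 x Jx); have [_ _ _ o] := Hg.1.
rewrite -(o _ _ I I) c2 gx => xy.
by move: (lt_le_trans yx xy); rewrite ltxx.
Qed.

Definition fF (g : T -> T) : triple T := (restr Jm g, restr J g, restr Jp g).
Definition fF' (p : triple T) : T -> T := p.1.1 \o p.1.2 \o p.2.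
Local Notation I3 := (in3 (is_aut_on Jm) (is_aut_on J) (is_aut_on Jp)).

Lemma fF'_Jm p y : I3 p -> Jm y -> fF' p y = p.1.1 y.
Proof.
case=> a1 a2 a3 hy; rewrite /fF' /= (aut_out a3) ?(aut_out a2) //; [exact: JmnJ|exact: JmnJp].
Qed.
Lemma fF'_J p y : I3 p -> J y -> fF' p y = p.1.2 y.
Proof.
case=> a1 a2 a3 hy; rewrite /fF' /= (aut_out a3) ?(aut_out a1) //; last exact: JnJp.
apply: JnJm; exact: aut_in a2 hy.
Qed.
Lemma fF'_Jp p y : I3 p -> Jp y -> fF' p y = p.2 y.
Proof.
case=> a1 a2 a3 hy; have hy' := aut_in a3 hy.
rewrite /fF' /= (aut_out a2) ?(aut_out a1) //; [exact: JpnJm|exact: JpnJ].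
Qed.

Lemma fF'_H p : I3 p -> H (fF' p).
Proof.
move=> ip; have [a1 a2 a3] := ip; split.
  apply: aut_comp; first apply: aut_comp.
  - exact: aut_on_glob convJm a1.
  - exact: aut_on_glob convJ a2.
  - exact: aut_on_glob convJp a3.
move=> x Jx; rewrite fF'_J //; exact: aut_in a2 Jx.
Qed.

Lemma fF_I3 g : H g -> I3 (fF g).
Proof.
move=> Hg; split; apply: restr_aut; try exact: Hg.1.
- by move=> x; apply: H_Jm.
- by move=> x; apply: H_J.
- by move=> x; apply: H_Jp.
Qed.

Lemma fF'K g : H g -> fF' (fF g) = g.
Proof.
move=> Hg; apply: functional_extensionality => x.
have ip := fF_I3 Hg.
case: (regions x) => [h|[h|h]].
- by rewrite fF'_Jm //= restr_in.
- by rewrite fF'_J //= restr_in.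
- by rewrite fF'_Jp //= restr_in.
Qed.

Lemma restr_fF' (Y : T -> Prop) (k : T -> T) p :
  is_aut_on Y k -> (forall y, Y y -> fF' p y = k y) -> restr Y (fF' p) = k.
Proof.
move=> ak e; apply: functional_extensionality => x.
case: (classic (Y x)) => Yx; first by rewrite restr_in // e.
by rewrite restr_out // (aut_out ak).
Qed.

Lemma fFK p : I3 p -> fF (fF' p) = p.
Proof.
move=> ip; have [a1 a2 a3] := ip; case: p ip a1 a2 a3 => [[p1 p2] p3] ip a1 a2 a3.
rewrite /fF (restr_fF' a1) ?(restr_fF' a2) ?(restr_fF' a3) // => y hy.
- exact: (fF'_Jp ip).
- exact: (fF'_J ip).
- exact: (fF'_Jm ip).
Qed.

Lemma restr_comp (Y : T -> Prop) g h : (forall x, Y x -> Y (h x)) ->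
  restr Y (g \o h) = restr Y g \o restr Y h.
Proof.
move=> hY; apply: functional_extensionality => x /=.
case: (classic (Y x)) => Yx; first by rewrite !restr_in //; apply: hY.
by rewrite !restr_out.
Qed.

Lemma fF_mul g h : H g -> H h -> fF (g \o h) = mul3 (fF g) (fF h).
Proof.
move=> Hg Hh; rewrite /fF /mul3 /=; congr (_, _, _); apply: restr_comp => x.
- by rewrite H_Jm.
- by rewrite H_J.
- by rewrite H_Jp.
Qed.

Lemma rays_lift (Y : T -> Prop) z (s : seq (T -> Prop)) :
  (forall V, List.In V s -> ray_subbasis Y V) -> (forall V, List.In V s -> V z) ->
  exists s' : seq (T -> Prop), [/\ (forall V, List.In V s' -> ray_subbasis (fun _ => True) V),
    (forall V, List.In V s' -> V z) &
    forall w, Y w -> (forall V, List.In V s' -> V w) -> forall V, List.In V s -> V w].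
Proof.
elim: s => [|V s IH] hS hz; first by exists [::]; split.
have [s' [h1 h2 h3]] := IH (fun W hW => hS W (or_intror hW)) (fun W hW => hz W (or_intror hW)).
have Vz := hz V (or_introl erefl).
have [a Ya [e|e]] := hS V (or_introl erefl).
- exists ((fun w : T => is_true (w < a)) :: s'); split.
  + move=> W [<-|/h1 //]; exists a => //; left=> w; tauto.
  + by move=> W [<-|/h2 //]; have /e[] := Vz.
  + move=> w Yw hw W [<-|hW]; last by apply: h3 => // W' hW'; apply: hw; right.
    by apply/e; split=> //; apply: (hw _ (or_introl erefl)).
- exists ((fun w : T => is_true (a < w)) :: s'); split.
  + move=> W [<-|/h1 //]; exists a => //; right=> w; tauto.
  + by move=> W [<-|/h2 //]; have /e[] := Vz.
  + move=> w Yw hw W [<-|hW]; last by apply: h3 => // W' hW'; apply: hw; right.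
    by apply/e; split=> //; apply: (hw _ (or_introl erefl)).
Qed.

Lemma Yopen_nbhd (Y : T -> Prop) O z : order_open Y O -> O z ->
  exists O3, [/\ order_open (fun _ => True) O3, O3 z & forall w, Y w -> O3 w -> O w].
Proof.
move=> [_ oO] Oz; have [s [sS sz sO]] := oO z Oz.
have [s' [h1 h2 h3]] := rays_lift sS sz.
exists (fun w => forall V, List.In V s' -> V w); split=> //.
- split=> // b hb; exists s'; split=> //.
- by move=> w Yw hw; apply: sO => //; apply: h3.
Qed.

Lemma Yopen_of_open (Y : T -> Prop) O : convex Y -> order_open (fun _ => True) O ->
  order_open Y (fun z => Y z /\ O z).
Proof.
move=> cY oO.
apply: (gen_cont (phi := id) (X2 := fun _ => True) (gen_open_self _ _) _ _ oO) => //.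
move=> V a [c _ [e|e]] Ya /= Va.
- case: (classic (Y c)) => Yc.
    apply: (nbhd_mono (P := fun w => Y w /\ w < c)); first by move=> b _ [_ ?] _; apply/e.
    apply: nbhd_sub; last by split=> //; case/e: Va.
    by exists c => //; left.
  have ac : a < c by case/e: Va.
  case: (convex_side cY Ya Yc) => h.
    apply: nbhd_mono (nbhd_true _ _ _) => b Yb _ _; apply/e; split=> //; exact: h.
  by have := h _ Ya; rewrite ltNge (ltW ac).
- case: (classic (Y c)) => Yc.
    apply: (nbhd_mono (P := fun w => Y w /\ c < w)); first by move=> b _ [_ ?] _; apply/e.
    apply: nbhd_sub; last by split=> //; case/e: Va.
    by exists c => //; right.
  have ac : c < a by case/e: Va.
  case: (convex_side cY Ya Yc) => h.
    by have := h _ Ya; rewrite ltNge (ltW ac).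
  apply: nbhd_mono (nbhd_true _ _ _) => b Yb _ _; apply/e; split=> //; exact: h.
Qed.

Lemma H_open_p : tau_p (fun _ : T => True) H.
Proof.
split; first by move=> g [].
move=> g Hg; have [x0 Jx0] := x0J; have Jg := Hg.2 x0 Jx0.
have [a Ja ag] := no_min Jg; have [b Jb gb] := no_max Jg.
pose O := fun z => a < z /\ z < b.
have oO : order_open (fun _ => True) O.
  split=> // z Oz; exists [:: (fun w : T => is_true (w < b)); (fun w : T => is_true (a < w))]; split.
  - move=> V [<-|[<-|[]]]; [exists b => //; left|exists a => //; right]; move=> w; tauto.
  - by move=> V [<-|[<-|[]]]; case: Oz.
  - by move=> w _ hw; split; [apply: (hw _ (or_intror (or_introl erefl)))|apply: (hw _ (or_introl erefl))].
apply: (nbhd_mono (P := fun h => is_aut h /\ O (h x0))).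
  move=> h _ [ah [h1 h2]]; apply: (H_of_point (x := x0)) => //.
  exact: convJ Ja Jb (ltW h1) (ltW h2).
apply: nbhd_sub; last by split=> //; case: Hg.
exists x0, O; split=> //.
Qed.

Lemma fix_H h x0 : is_aut h -> J x0 -> h x0 = x0 -> H h.
Proof. by move=> ah Jx e; apply: (H_of_point (x := x0)) => //; rewrite e. Qed.

Lemma H_open_d : tau_d (fun _ : T => True) H.
Proof.
split; first by move=> g [].
move=> g Hg; have [x0 Jx0] := x0J; exists [:: x0]; split=> // h ah hfix.
have Hh := fix_H ah Jx0 (hfix x0 (or_introl erefl)).
split; first exact: aut_comp Hg.1 Hh.1.
by move=> x Jx; apply: Hg.2; apply: Hh.2.
Qed.


Local Notation PS o1 o2 o3 := (fun V : triple T -> Prop => exists O,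
       [\/ o1 O /\ (forall p, V p <-> (I3 p /\ O p.1.1)),
           o2 O /\ (forall p, V p <-> (I3 p /\ O p.1.2))
         | o3 O /\ (forall p, V p <-> (I3 p /\ O p.2))]).

Local Notation PO_p := (prod3_open (is_aut_on Jm) (is_aut_on J) (is_aut_on Jp) (tau_p Jm) (tau_p J) (tau_p Jp)).
Local Notation PO_d := (prod3_open (is_aut_on Jm) (is_aut_on J) (is_aut_on Jp) (tau_d Jm) (tau_d J) (tau_d Jp)).

Lemma H_comp g h : H g -> H h -> H (g \o h).
Proof.
move=> Hg Hh; split; first exact: aut_comp Hg.1 Hh.1.
by move=> x Jx; apply: Hg.2; apply: Hh.2.
Qed.

Lemma restr_cont_p (Y : T -> Prop) O1 : (forall g x, H g -> (Y (g x) <-> Y x)) ->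
  tau_p Y O1 -> tau_p (fun _ => True) (fun g => H g /\ O1 (restr Y g)).
Proof.
move=> HY oO1.
apply: (gen_cont (phi := restr Y) (X2 := is_aut_on Y) H_open_p _ _ oO1).
  by move=> g Hg; apply: restr_aut; [exact: Hg.1|move=> x; exact: HY].
move=> V g [y [O [Yy oO eV]]] Hg /eV [_ Oy]; rewrite restr_in // in Oy.
have [O3 [oO3 O3g O3O]] := Yopen_nbhd oO Oy.
apply: (nbhd_mono (P := fun h => is_aut h /\ O3 (h y))).
  move=> h ah [_ O3h] Hh; apply/eV; split.
    by apply: restr_aut; [exact: Hh.1|move=> x; exact: HY].
  by rewrite restr_in //; apply: O3O => //; apply/HY.
apply: nbhd_sub; last by split => //; exact: Hg.1.
by exists y, O3.
Qed.

Lemma fF_cont_p O : PO_p O -> sub_open H (tau_p (fun _ => True)) (fun g => H g /\ O (fF g)).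
Proof.
move=> oO; exists (fun g => H g /\ O (fF g)); last by move=> g; tauto.
apply: (gen_cont (phi := fF) (X2 := I3) H_open_p _ _ oO).
  by move=> g Hg; apply: fF_I3.
move=> W g [O' [[oO' eW]|[oO' eW]|[oO' eW]]] Hg /eW [_ hO'].
- have := nbhd_open (restr_cont_p (Y := Jm) (fun g x Hg => H_Jm x Hg) oO') (conj Hg hO').
  apply: nbhd_mono => h _ [Hh hh] _; apply/eW; split=> //; exact: fF_I3.
- have := nbhd_open (restr_cont_p (Y := J) (fun g x Hg => H_J x Hg) oO') (conj Hg hO').
  apply: nbhd_mono => h _ [Hh hh] _; apply/eW; split=> //; exact: fF_I3.
- have := nbhd_open (restr_cont_p (Y := Jp) (fun g x Hg => H_Jp x Hg) oO') (conj Hg hO').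
  apply: nbhd_mono => h _ [Hh hh] _; apply/eW; split=> //; exact: fF_I3.
Qed.

Lemma cyl_p (Y : T -> Prop) (pi : triple T -> T -> T) (W : (T -> T) -> Prop) y O p :
  convex Y -> Y y -> order_open (fun _ => True) O ->
  (forall h, W h <-> is_aut h /\ O (h y)) ->
  (forall q, I3 q -> is_aut_on Y (pi q)) ->
  (forall q, I3 q -> fF' q y = pi q y) ->
  (forall O1, tau_p Y O1 -> PS (tau_p Jm) (tau_p J) (tau_p Jp) (fun q => I3 q /\ O1 (pi q))) ->
  I3 p -> O (fF' p y) ->
  nbhd I3 (PS (tau_p Jm) (tau_p J) (tau_p Jp)) p (fun q => I3 q -> W (fF' q)).
Proof.
move=> cY Yy oO eW api hval hcyl ip Op.
have oO'' := Yopen_of_open cY oO.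
pose O1 := fun k => is_aut_on Y k /\ (Y (k y) /\ O (k y)).
have oO1 : tau_p Y O1.
  apply: gen_open_sub; last by move=> k [].
  by exists y, (fun z => Y z /\ O z); split.
apply: (nbhd_mono (P := fun q => I3 q /\ O1 (pi q))).
  move=> q _ [iq [_ [_ Oq]]] _; apply/eW; split; first exact: (fF'_H iq).1.
  by rewrite hval.
apply: nbhd_sub; first exact: hcyl.
split=> //; split; first exact: api.
split; first exact: aut_in (api p ip) Yy.
by rewrite -hval.
Qed.

Lemma fF'_cont_p U : sub_open H (tau_p (fun _ => True)) U -> PO_p (fun p => I3 p /\ U (fF' p)).
Proof.
move=> [V oV eU].
apply: (gen_open_ext (U := fun p => I3 p /\ V (fF' p))).
  move=> p; split=> [[ip hV]|[ip /eU[_ ?]]]; split=> //; apply/eU; split=> //; exact: fF'_H.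
apply: (gen_cont (phi := fF') (X2 := fun g : T -> T => is_aut g) (gen_open_self _ _) _ _ oV).
  by move=> p /fF'_H [].
move=> W p [y [O [_ oO eW]]] ip /eW [_ Oy].
case: (regions y) => [hy|[hy|hy]].
- apply: (cyl_p (pi := fun q => q.1.1) convJm hy oO eW) => //.
  + by move=> q [].
  + by move=> q iq; rewrite fF'_Jm.
  + by move=> O1 oO1; exists O1; apply: Or31; split=> // q.
- apply: (cyl_p (pi := fun q => q.1.2) convJ hy oO eW) => //.
  + by move=> q [].
  + by move=> q iq; rewrite fF'_J.
  + by move=> O1 oO1; exists O1; apply: Or32; split=> // q.
- apply: (cyl_p (pi := fun q => q.2) convJp hy oO eW) => //.
  + by move=> q [].
  + by move=> q iq; rewrite fF'_Jp.
  + by move=> O1 oO1; exists O1; apply: Or33; split=> // q.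
Qed.

Lemma collect (B : Type) (s : seq B) (R : B -> (T -> T) -> Prop) :
  (forall W, List.In W s -> exists l : seq T, forall h, is_aut h ->
      (forall y, List.In y l -> h y = y) -> R W h) ->
  exists l : seq T, forall h, is_aut h -> (forall y, List.In y l -> h y = y) ->
      forall W, List.In W s -> R W h.
Proof.
elim: s => [|W s IH] hs; first by exists [::] => h _ _ W [].
have [l1 h1] := hs W (or_introl erefl).
have [l2 h2] := IH (fun W' hW' => hs W' (or_intror hW')).
exists (l1 ++ l2) => h ah hfix W' [<-|hW'].
- by apply: h1 => // y hy; apply: hfix; apply/List.in_app_iff; left.
- by apply: h2 => // y hy; apply: hfix; apply/List.in_app_iff; right.
Qed.

Lemma cyl_d (Y : T -> Prop) (pi : triple T -> T -> T) (W : triple T -> Prop) O' g :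
  (forall h x, H h -> (Y (h x) <-> Y x)) -> (forall h, pi (fF h) = restr Y h) ->
  (forall p q, pi (mul3 p q) = pi p \o pi q) -> tau_d Y O' ->
  (forall q, W q <-> I3 q /\ O' (pi q)) -> H g -> W (fF g) ->
  exists l : seq T, forall h, is_aut h -> (forall y, List.In y l -> h y = y) ->
     H h -> W (fF (g \o h)).
Proof.
move=> HY pif pim [_ oO'] eW Hg /eW [_]; rewrite pif => /oO' [l [lY hl]].
exists l => h ah hfix Hh; apply/eW; split; first exact/fF_I3/H_comp.
rewrite fF_mul // pim !pif; apply: hl.
  by apply: restr_aut => // x; apply: HY.
by move=> y hy; rewrite restr_in ?hfix //; apply: lY.
Qed.

Lemma fF_cont_d O : PO_d O -> sub_open H (tau_d (fun _ => True)) (fun g => H g /\ O (fF g)).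
Proof.
move=> [_ oO]; exists (fun g => H g /\ O (fF g)); last by move=> g; tauto.
split; first by move=> g [[]].
move=> g [Hg Og]; have [s [sS sg sO]] := oO _ Og.
have [x0 Jx0] := x0J.
have hW : forall W, List.In W s -> exists l : seq T, forall h, is_aut h ->
      (forall y, List.In y l -> h y = y) -> H h -> W (fF (g \o h)).
  move=> W hW; have := sg W hW; have [O' [[oO' eW]|[oO' eW]|[oO' eW]]] := sS W hW.
  - apply: (cyl_d (pi := fun q => q.1.1) _ _ _ oO' eW Hg) => //; by move=> h x Hh; apply: H_Jm.
  - apply: (cyl_d (pi := fun q => q.1.2) _ _ _ oO' eW Hg) => //; by move=> h x Hh; apply: H_J.
  - apply: (cyl_d (pi := fun q => q.2) _ _ _ oO' eW Hg) => //; by move=> h x Hh; apply: H_Jp.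
have [l hl] := collect hW.
exists (x0 :: l); split=> // h ah hfix.
have Hh := fix_H ah Jx0 (hfix x0 (or_introl erefl)).
have Hgh := H_comp Hg Hh.
split=> //; apply: sO; first exact: fF_I3.
move=> W hW'; apply: hl => //; by move=> y hy; apply: hfix; right.
Qed.

Lemma tau_d_Oi (Y : T -> Prop) (s : seq T) (k0 : T -> T) :
  tau_d Y (fun k => is_aut_on Y k /\ forall y, List.In y s -> Y y -> k y = k0 y).
Proof.
split; first by move=> g [].
move=> k [ak hk].
have [l [lY sl]] : exists l : seq T, (forall y, List.In y l -> Y y) /\
    (forall y, List.In y s -> Y y -> List.In y l).
  clear hk; elim: s => [|a s [l [lY sl]]]; first by exists [::].
  case: (classic (Y a)) => Ya.
  - exists (a :: l); split.
    + by move=> y [<-|/lY].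
    + by move=> y [<-|/sl h] Yy; [left|right; exact: h Yy].
  - exists l; split=> // y [<-|/sl h] Yy //; exact: h Yy.
exists l; split=> // h ah hfix; split; first exact: aut_comp.
by move=> y hy Yy /=; rewrite hfix ?hk //; apply: sl.
Qed.

Lemma fF'_cont_d U : sub_open H (tau_d (fun _ => True)) U -> PO_d (fun p => I3 p /\ U (fF' p)).
Proof.
move=> [V [Vaut oV] eU]; split; first by move=> p [].
move=> p [ip /eU [Hp Vp]]; have [s [_ sV]] := oV _ Vp.
pose C1 := fun q : triple T => I3 q /\ (is_aut_on Jm q.1.1 /\ forall y, List.In y s -> Jm y -> q.1.1 y = p.1.1 y).
pose C2 := fun q : triple T => I3 q /\ (is_aut_on J q.1.2 /\ forall y, List.In y s -> J y -> q.1.2 y = p.1.2 y).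
pose C3 := fun q : triple T => I3 q /\ (is_aut_on Jp q.2 /\ forall y, List.In y s -> Jp y -> q.2 y = p.2 y).
have n1 : nbhd I3 (PS (tau_d Jm) (tau_d J) (tau_d Jp)) p C1.
  apply: nbhd_sub; last by split=> //; split=> //; case: ip.
  by exists (fun k => is_aut_on Jm k /\ forall y, List.In y s -> Jm y -> k y = p.1.1 y); apply: Or31; split; [exact: tau_d_Oi|].
have n2 : nbhd I3 (PS (tau_d Jm) (tau_d J) (tau_d Jp)) p C2.
  apply: nbhd_sub; last by split=> //; split=> //; case: ip.
  by exists (fun k => is_aut_on J k /\ forall y, List.In y s -> J y -> k y = p.1.2 y); apply: Or32; split; [exact: tau_d_Oi|].
have n3 : nbhd I3 (PS (tau_d Jm) (tau_d J) (tau_d Jp)) p C3.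
  apply: nbhd_sub; last by split=> //; split=> //; case: ip.
  by exists (fun k => is_aut_on Jp k /\ forall y, List.In y s -> Jp y -> k y = p.2 y); apply: Or33; split; [exact: tau_d_Oi|].
apply: nbhd_mono (nbhd_and (nbhd_and n1 n2) n3) => q iq [[[_ [_ e1]] [_ [_ e2]]] [_ [_ e3]]].
have agree : forall y, List.In y s -> fF' q y = fF' p y.
  move=> y hy; case: (regions y) => [h|[h|h]].
  - by rewrite !fF'_Jm // e1.
  - by rewrite !fF'_J // e2.
  - by rewrite !fF'_Jp // e3.
have [g' [ag' c1' c2']] := aut_inv (fF'_H ip).1.
have := sV (g' \o fF' q) (aut_comp ag' (fF'_H iq).1).
have -> : fF' p \o (g' \o fF' q) = fF' q.
  by apply: functional_extensionality => z /=; rewrite c2'.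
move=> hV; split=> //; apply/eU; split; first exact: fF'_H.
by apply: hV => y hy /=; rewrite agree // c1'.
Qed.

Lemma part3 x : J x -> forall g : T -> T, (is_aut g /\ g x = x) <->
  (exists g1 g2 g3, [/\ is_aut_on Jm g1, is_aut_on J g2, g2 x = x,
                        is_aut_on Jp g3 & g = g1 \o g2 \o g3]).
Proof.
move=> Jx g; split.
- move=> [ag gx]; have Hg := fix_H ag Jx gx; have [a1 a2 a3] := fF_I3 Hg.
  exists (restr Jm g), (restr J g), (restr Jp g); split=> //.
  + by rewrite restr_in.
  + by rewrite -{1}(fF'K Hg).
- move=> [g1 [g2 [g3 [a1 a2 e a3 ->]]]].
  have ip : I3 (g1, g2, g3) by split.
  have [ag _] := fF'_H ip; split; first exact: ag.
  change (fF' (g1, g2, g3) x = x); by rewrite fF'_J.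
Qed.

Lemma main_sec :
  (subgroup (@is_aut d T) H /\ tau_p (fun _ => True) H /\ tau_d (fun _ => True) H) /\
  (exists f f',
     topgrp_iso3 H (sub_open H (tau_p (fun _ => True)))
       (is_aut_on Jm) (is_aut_on J) (is_aut_on Jp)
       (prod3_open (is_aut_on Jm) (is_aut_on J) (is_aut_on Jp)
                   (tau_p Jm) (tau_p J) (tau_p Jp)) f f') /\
  (exists f f',
     topgrp_iso3 H (sub_open H (tau_d (fun _ => True)))
       (is_aut_on Jm) (is_aut_on J) (is_aut_on Jp)
       (prod3_open (is_aut_on Jm) (is_aut_on J) (is_aut_on Jp)
                   (tau_d Jm) (tau_d J) (tau_d Jp)) f f') /\
  (forall x, J x -> forall g : T -> T,
     (is_aut g /\ g x = x) <->
     (exists g1 g2 g3, [/\ is_aut_on Jm g1, is_aut_on J g2, g2 x = x,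
                           is_aut_on Jp g3 & g = g1 \o g2 \o g3])).
Proof.
split.
  split; last by split; [exact: H_open_p|exact: H_open_d].
  split.
  - by move=> g [].
  - by split; first exact: aut_id.
  - by move=> g h; apply: H_comp.
  - by move=> g g' Hg c1 c2; apply: H_cancel c1 c2.
split.
  exists fF, fF'; split; split.
  - exact: fF_I3.
  - exact: fF'_H.
  - exact: fF'K.
  - exact: fFK.
  - exact: fF_mul.
  - exact: fF_cont_p.
  - exact: fF'_cont_p.
split.
  exists fF, fF'; split; split.
  - exact: fF_I3.
  - exact: fF'_H.
  - exact: fF'K.
  - exact: fFK.
  - exact: fF_mul.
  - exact: fF_cont_d.
  - exact: fF'_cont_d.
exact: part3.
Qed.

End WithJ.

Theorem proposition5p1 (d : Order.disp_t) (T : orderType d) (J : T -> Prop) :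
  homogeneous T -> is_interval J -> regular_int J -> proper_int J ->
  let H := setstab J in
  let AX := @is_aut d T in
  let Jm := lower J in
  let Jp := upper J in
  (* (1) *)
  (subgroup AX H /\ tau_p (fun _ => True) H /\ tau_d (fun _ => True) H) /\
  (* (2) *)
  (exists f f',
     topgrp_iso3 H (sub_open H (tau_p (fun _ => True)))
       (is_aut_on Jm) (is_aut_on J) (is_aut_on Jp)
       (prod3_open (is_aut_on Jm) (is_aut_on J) (is_aut_on Jp)
                   (tau_p Jm) (tau_p J) (tau_p Jp)) f f') /\
  (exists f f',
     topgrp_iso3 H (sub_open H (tau_d (fun _ => True)))
       (is_aut_on Jm) (is_aut_on J) (is_aut_on Jp)
       (prod3_open (is_aut_on Jm) (is_aut_on J) (is_aut_on Jp)
                   (tau_d Jm) (tau_d J) (tau_d Jp)) f f') /\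
  (* (3) *)
  (forall x, J x -> forall g : T -> T,
     (AX g /\ g x = x) <->
     (exists g1 g2 g3, [/\ is_aut_on Jm g1, is_aut_on J g2, g2 x = x,
                           is_aut_on Jp g3 & g = g1 \o g2 \o g3])).
Proof.
move=> hom hint hreg hprop; exact: (main_sec hom hint hreg hprop).
Qed.
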